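(* Let $n\ge1$ and $j\ge2$ be integers with $j\not\equiv1\pmod 3$, and let $\lambda\in\Sigma$ satisfy \[ \max\{\lambda_1-\lambda_2,\ \lambda_2-\lambda_3,\ \lambda_3-\lambda_1+1\}\le n-i-1\ \text{ if } j=3i+2, \] \[ \max\{\lambda_2-\lambda_1,\ \lambda_3-\lambda_2,\ \lambda_1-\lambda_3-1\}\le n-i-1\ \text{ if } j=3i. \] Then the number of $(K'F'^\times,K_n)$-double cosets contained in $K'F'^\times\lambda(\varpi)K$ is at most $q^{3n-2i}(1+1/q)^3$ when $j=3i$, and at most $q^{3n-2i-2}(1+1/q)^3$ when $j=3i+2$.
   Context: $F$ is a $p$-adic field with $p\ne2,3$, ring of integers $R$, uniformizer $\varpi$, residue field of order $q$. $\Sigma=\{\lambda\in\mathbb Z^3:\lambda_1+\lambda_2+\lambda_3=0\}$ and $\lambda(\varpi)=\operatorname{diag}(\varpi^{\lambda_1},\varpi^{\lambda_2},\varpi^{\lambda_3})$. $F'=F(\varpi')$ with $\varpi'^3=\varpi$, embedded in $M_3(F)$ via its regular representation on the $R$-basis $\{1,\varpi',\varpi'^2\}$ of its ring of integers, so that $\varpi'$ is the matrix with entries $1$ in positions $(2,1),(3,2)$, $\varpi$ in position $(1,3)$, and $0$ elsewhere. $K=GL_3(R)$, $K_n$ is the subgroup of $K$ of elements congruent to the identity mod $\varpi^n$, and $K'$ is the lower triangular Iwahori subgroup (elements of $K$ whose reduction mod $\varpi$ is lower triangular). *)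

(* Defs.v *)
From HB Require Import structures.
From mathcomp Require Import all_boot all_order all_algebra.
Set Implicit Arguments. Unset Strict Implicit. Unset Printing Implicit Defensive.
Import Order.TTheory GRing.Theory Num.Theory.
Local Open Scope ring_scope.

Section PAdic.
Variables (F : fieldType) (v : F -> int) (w : F).

Definition congr_pow (k : int) (x y : F) : Prop :=
  x - y = 0 \/ k <= v (x - y).

Definition in_R (x : F) : Prop := x = 0 \/ 0 <= v x.

(** v is a normalized discrete valuation on F^x (v 0 is irrelevant) *)
Definition discrete_valuation : Prop :=
  (forall x y, x != 0 -> y != 0 -> v (x * y) = v x + v y) /\
  (forall x y, x != 0 -> y != 0 -> x + y != 0 -> Num.min (v x) (v y) <= v (x + y)).

(** the residue field R / wR has exactly q elements *)
Definition residue_card (q : nat) : Prop :=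
  exists s : seq F,
    [/\ size s = q, (forall x, x \in s -> in_R x),
        (forall a b, (a < size s)%N -> (b < size s)%N -> a <> b ->
            ~ congr_pow 1 (nth 0 s a) (nth 0 s b)) &
        (forall x, in_R x -> exists y, y \in s /\ congr_pow 1 x y)].

(** F is a p-adic field (char 0, complete w.r.t. a discrete valuation,
    finite residue field of order q and characteristic p), with
    uniformizer w and ring of integers R = in_R. *)
Definition padic_field (p q : nat) : Prop :=
  [/\ discrete_valuation /\ (w != 0 /\ v w = 1),
      (forall m : nat, (0 < m)%N -> (m%:R : F) != 0),
      residue_card q,
      (prime p /\ congr_pow 1 (p%:R) 0) &
      (forall u : nat -> F,
         (forall k : int, exists N, forall m l, (N <= m)%N -> (N <= l)%N ->
             congr_pow k (u m) (u l)) ->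
         exists L, forall k : int, exists N, forall m, (N <= m)%N ->
             congr_pow k (u m) L)].

Definition mat_R (A : 'M[F]_3) : Prop := forall i j, in_R (A i j).

(** K = GL_3(R) *)
Definition inK (A : 'M[F]_3) : Prop :=
  mat_R A /\ \det A != 0 /\ v (\det A) = 0.

Definition inKn (n : nat) (A : 'M[F]_3) : Prop :=
  inK A /\ forall i j, congr_pow n%:Z (A i j) ((1%:M : 'M[F]_3) i j).

(** K' = lower triangular Iwahori: reduction mod w lower triangular *)
Definition inK' (A : 'M[F]_3) : Prop :=
  inK A /\ forall i j : 'I_3, (i < j)%N -> congr_pow 1 (A i j) 0.

(** the matrix of w' = w^(1/3) in the regular representation on {1,w',w'^2} *)
Definition wmat : 'M[F]_3 :=
  \matrix_(i < 3, j < 3)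
    if (i == 1%N :> nat) && (j == 0%N :> nat) then 1
    else if (i == 2%N :> nat) && (j == 1%N :> nat) then 1
    else if (i == 0%N :> nat) && (j == 2%N :> nat) then w
    else 0.

(** F'^x embedded in GL_3(F) *)
Definition inF'x (A : 'M[F]_3) : Prop :=
  exists a b c : F, (a, b, c) != (0, 0, 0) /\
    A = a%:M + b *: wmat + c *: (wmat *m wmat).

Definition inK'F'x (A : 'M[F]_3) : Prop :=
  exists k f, inK' k /\ inF'x f /\ A = k *m f.

Definition lam_mat (l1 l2 l3 : int) : 'M[F]_3 :=
  \matrix_(i < 3, j < 3)
    if i == j then w ^ (nth 0 [:: l1; l2; l3] i) else 0.

Definition in_big_cell (l1 l2 l3 : int) (g : 'M[F]_3) : Prop :=
  exists h k, inK'F'x h /\ inK k /\ g = h *m lam_mat l1 l2 l3 *m k.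

Definition same_dcoset (n : nat) (g g' : 'M[F]_3) : Prop :=
  exists h y, inK'F'x h /\ inKn n y /\ g' = h *m g *m y.

(** the number of (K'F'^x, K_n)-double cosets contained in
    K'F'^x lambda(w) K is at most N: any family of elements of
    K'F'^x lambda(w) K lying in pairwise distinct double cosets has
    at most N members. *)
Definition dcoset_count_le (n : nat) (l1 l2 l3 : int) (N : rat) : Prop :=
  forall s : seq 'M[F]_3,
    (forall g, g \in s -> in_big_cell l1 l2 l3 g) ->
    (forall a b, (a < size s)%N -> (b < size s)%N -> a <> b ->
        ~ same_dcoset n (nth 0 s a) (nth 0 s b)) ->
    (size s)%:R <= N.

End PAdic.

(* Main.v *)
Require Import Defs.
From HB Require Import structures.
From mathcomp Require Import all_boot all_order all_algebra zify ring lra.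
Set Implicit Arguments. Unset Strict Implicit. Unset Printing Implicit Defensive.
Import Order.TTheory GRing.Theory Num.Theory.
Local Open Scope ring_scope.

Section Val.
Variables (F : fieldType) (v : F -> int) (w : F).
Hypothesis vMh : forall x y : F, x != 0 -> y != 0 -> v (x * y) = v x + v y.
Hypothesis vDh : forall x y : F, x != 0 -> y != 0 -> x + y != 0 -> Num.min (v x) (v y) <= v (x + y).
Hypothesis w0 : w != 0.
Hypothesis vw : v w = 1.

Definition vge (k : int) (x : F) : bool := (x == 0) || (k <= v x).
Definition unitR (x : F) : bool := (x != 0) && (v x == 0).

Lemma v1 : v 1 = 0.
Proof. have h : v (1 * 1 : F) = v 1 + v 1 := vMh (oner_neq0 _) (oner_neq0 _). rewrite mulr1 in h. lia. Qed.

Lemma vN1 : v (-1) = 0.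
Proof.
have h1 : (-1 : F) != 0 by rewrite oppr_eq0 oner_neq0.
have := vMh h1 h1. rewrite mulrNN mulr1 v1 => h. lia.
Qed.

Lemma vN x : v (- x) = v x.
Proof.
have [->|x0] := eqVneq x 0; first by rewrite oppr0.
have h1 : (-1 : F) != 0 by rewrite oppr_eq0 oner_neq0.
by rewrite -mulN1r vMh // vN1 add0r.
Qed.

Lemma vV x : x != 0 -> v x^-1 = - v x.
Proof.
move=> x0. have xi : x^-1 != 0 by rewrite invr_eq0.
have := vMh x0 xi. rewrite mulfV // v1 => h. lia.
Qed.

Lemma vge0 k : vge k 0.
Proof. by rewrite /vge eqxx. Qed.

Lemma vge_le a b x : a <= b -> vge b x -> vge a x.
Proof. rewrite /vge => ab /orP [->//|h]. apply/orP; right. lia. Qed.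

Lemma vgeN k x : vge k (- x) = vge k x.
Proof. by rewrite /vge oppr_eq0 vN. Qed.

Lemma vgeD k x y : vge k x -> vge k y -> vge k (x + y).
Proof.
have [->|x0] := eqVneq x 0; first by move=> *; rewrite add0r.
have [->|y0] := eqVneq y 0; first by move=> *; rewrite addr0.
have [->|s0] := eqVneq (x + y) 0; first by move=> *; rewrite vge0.
rewrite /vge (negbTE x0) (negbTE y0) (negbTE s0) /= => hx hy.
have := vDh x0 y0 s0. lia.
Qed.

Lemma vgeB k x y : vge k x -> vge k y -> vge k (x - y).
Proof. by move=> hx hy; apply: vgeD => //; rewrite vgeN. Qed.

Lemma vgeM a b x y : vge a x -> vge b y -> vge (a + b) (x * y).
Proof.
have [->|x0] := eqVneq x 0; first by move=> *; rewrite mul0r vge0.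
have [->|y0] := eqVneq y 0; first by move=> *; rewrite mulr0 vge0.
rewrite /vge (negbTE x0) (negbTE y0) mulf_eq0 (negbTE x0) (negbTE y0) /= vMh //.
lia.
Qed.

Lemma vgeM0 k x y : vge 0 x -> vge k y -> vge k (x * y).
Proof. by move=> hx hy; have := vgeM hx hy; rewrite add0r. Qed.

Lemma vgeMr k x y : vge k x -> vge 0 y -> vge k (x * y).
Proof. by move=> hx hy; have := vgeM hx hy; rewrite addr0. Qed.

Lemma vge1 : vge 0 1.
Proof. by rewrite /vge v1 lexx orbT. Qed.

Lemma vgeN1 : vge 0 (-1).
Proof. by rewrite vgeN vge1. Qed.

Lemma vge_sum k (I : Type) (r : seq I) (P : pred I) (G : I -> F) :
  (forall i, P i -> vge k (G i)) -> vge k (\sum_(i <- r | P i) G i).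
Proof. by move=> h; apply: (big_ind (vge k)) => //; [exact: vge0 | exact: vgeD]. Qed.

Lemma vge_prod (I : Type) (r : seq I) (P : pred I) (G : I -> F) :
  (forall i, P i -> vge 0 (G i)) -> vge 0 (\prod_(i <- r | P i) G i).
Proof. by move=> h; apply: (big_ind (vge 0)) => //; [exact: vge1 | move=> x y; exact: vgeM0]. Qed.

Lemma vgeX x n : vge 0 x -> vge 0 (x ^+ n).
Proof. by move=> h; elim: n => [|n IH]; rewrite ?expr0 ?vge1 // exprS vgeM0. Qed.

Lemma wz_neq0 (z : int) : w ^ z != 0.
Proof. by rewrite expfz_eq0 negb_and w0 orbT. Qed.

Lemma v_wn (n : nat) : v (w ^+ n) = n%:Z.
Proof.
elim: n => [|n IH]; first by rewrite expr0 v1.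
rewrite exprS vMh ?expf_neq0 // vw IH. lia.
Qed.

Lemma v_wz (z : int) : v (w ^ z) = z.
Proof.
case: z => n; first by rewrite v_wn.
rewrite NegzE -invr_expz -exprnP vV ?expf_neq0 // v_wn. lia.
Qed.

Lemma vge_wz k (z : int) x : vge k x -> vge (z + k) (w ^ z * x).
Proof. move=> h; apply: vgeM => //; by rewrite /vge v_wz lexx orbT. Qed.

Lemma vge_wzE k (z : int) x : vge (z + k) (w ^ z * x) = vge k x.
Proof.
rewrite /vge mulf_eq0 (negbTE (wz_neq0 z)) /=.
have [//|x0] := eqVneq x 0.
rewrite vMh ?wz_neq0 // v_wz. apply/idP/idP; lia.
Qed.

Lemma unitR_vge x : unitR x -> vge 0 x.
Proof. by case/andP=> _ /eqP h; rewrite /vge h lexx orbT. Qed.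

Lemma nonunit_vge1 x : vge 0 x -> ~~ unitR x -> vge 1 x.
Proof.
rewrite /vge /unitR. have [//|x0] := eqVneq x 0. rewrite /= => h1 h2. lia.
Qed.

Lemma unitRV x : unitR x -> unitR x^-1.
Proof. case/andP=> x0 /eqP h. by rewrite /unitR invr_eq0 x0 vV // h. Qed.

Lemma unitRM x y : unitR x -> unitR y -> unitR (x * y).
Proof.
case/andP=> x0 /eqP hx /andP [y0 /eqP hy].
by rewrite /unitR mulf_neq0 // vMh // hx hy.
Qed.

Lemma unitR1 : unitR 1.
Proof. by rewrite /unitR oner_neq0 v1. Qed.

Lemma unitR_add a d : unitR a -> vge 1 d -> unitR (a + d).
Proof.
case/andP=> a0 /eqP va.
have [->|d0] := eqVneq d 0; first by rewrite addr0 /unitR a0 va.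
rewrite /vge (negbTE d0) /= => vd.
have s0 : a + d != 0.
  apply: contraTneq vd => h. have -> : d = - a by apply/eqP; rewrite -addr_eq0 addrC h.
  by rewrite vN va.
have h1 := vDh a0 d0 s0.
have md0 : - d != 0 by rewrite oppr_eq0.
have h2 := vDh s0 md0. rewrite addrK vN in h2. have := h2 a0.
rewrite /unitR s0 /=. move=> h3; apply/eqP. lia.
Qed.

Lemma unitR_vge1_sub a b : unitR a -> vge 0 b -> vge 1 (b - a) -> unitR b.
Proof. by move=> ha _ hd; have := unitR_add ha hd; rewrite addrC subrK. Qed.

Lemma vge_divw k x : vge (k + 1) x -> vge k (x / w).
Proof.
move=> h. have -> : x / w = w ^ (-1) * x by rewrite mulrC -exprz_inv expr1z.
have := vge_wz (-1) h. rewrite /=. by have -> : -1 + (k + 1) = k by lia.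
Qed.

Lemma vge_mulw k x : vge k x -> vge (k + 1) (w * x).
Proof. move=> h. have := vge_wz 1 h. by rewrite expr1z addrC. Qed.


Lemma det3 (A : 'M[F]_3) : \det A =
  A 0 0 * (A 1 1 * A 2 2 - A 1 2 * A 2 1)
  - A 0 1 * (A 1 0 * A 2 2 - A 1 2 * A 2 0)
  + A 0 2 * (A 1 0 * A 2 1 - A 1 1 * A 2 0).
Proof.
rewrite (expand_det_row _ 0) !big_ord_recl big_ord0 /cofactor.
rewrite !(expand_det_row _ 0) !big_ord_recl !big_ord0 /cofactor !det_mx11 !mxE.
pose B := fun i j : nat => A (inord i) (inord j).
have E : forall i j : 'I_3, A i j = B i j by move=> i j; rewrite /B !inord_val.
clearbody B; rewrite !E /=.
rewrite !expr0 !expr1 /=. ring.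
Qed.

Definition mvge m n (k : int) (A : 'M[F]_(m, n)) := forall i j, vge k (A i j).

Lemma mvge_mul m n p a b (A : 'M[F]_(m, n)) (B : 'M[F]_(n, p)) :
  mvge a A -> mvge b B -> mvge (a + b) (A *m B).
Proof. move=> hA hB i j; rewrite mxE; apply: vge_sum => l _; exact: vgeM. Qed.

Lemma mvge_mul0 m n p b (A : 'M[F]_(m, n)) (B : 'M[F]_(n, p)) :
  mvge 0 A -> mvge b B -> mvge b (A *m B).
Proof. by move=> hA hB; have := mvge_mul hA hB; rewrite add0r. Qed.

Lemma mvge_mulr m n p b (A : 'M[F]_(m, n)) (B : 'M[F]_(n, p)) :
  mvge b A -> mvge 0 B -> mvge b (A *m B).
Proof. by move=> hA hB; have := mvge_mul hA hB; rewrite addr0. Qed.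

Lemma mvgeD m n k (A B : 'M[F]_(m, n)) : mvge k A -> mvge k B -> mvge k (A + B).
Proof. by move=> hA hB i j; rewrite mxE; apply: vgeD. Qed.

Lemma mvgeN m n k (A : 'M[F]_(m, n)) : mvge k A -> mvge k (- A).
Proof. by move=> hA i j; rewrite mxE vgeN. Qed.

Lemma mvgeB m n k (A B : 'M[F]_(m, n)) : mvge k A -> mvge k B -> mvge k (A - B).
Proof. by move=> hA hB; apply: mvgeD => //; apply: mvgeN. Qed.

Lemma mvge_le m n a b (A : 'M[F]_(m, n)) : a <= b -> mvge b A -> mvge a A.
Proof. by move=> ab h i j; apply: vge_le (h i j). Qed.

Lemma mvge1 n : mvge 0 (1%:M : 'M[F]_n).
Proof. by move=> i j; rewrite mxE; case: (i == j); rewrite /= ?vge1 ?vge0. Qed.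

Lemma mvge0 m n k : mvge k (0 : 'M[F]_(m, n)).
Proof. by move=> i j; rewrite mxE vge0. Qed.

Definition Pc (m : int) (x y : F) := [&& vge 0 x, vge 0 y & vge m (x - y)].

Lemma PcM m x1 x2 y1 y2 : Pc m x1 x2 -> Pc m y1 y2 -> Pc m (x1 * y1) (x2 * y2).
Proof.
case/and3P=> a1 a2 a3 /and3P [b1 b2 b3]; apply/and3P; split; try exact: vgeM0.
have -> : x1 * y1 - x2 * y2 = x1 * (y1 - y2) + (x1 - x2) * y2 by ring.
by apply: vgeD; [apply: vgeM0 | apply: vgeMr].
Qed.

Lemma PcD m x1 x2 y1 y2 : Pc m x1 x2 -> Pc m y1 y2 -> Pc m (x1 + y1) (x2 + y2).
Proof.
case/and3P=> a1 a2 a3 /and3P [b1 b2 b3]; apply/and3P; split; try exact: vgeD.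
have -> : x1 + y1 - (x2 + y2) = (x1 - x2) + (y1 - y2) by ring.
exact: vgeD.
Qed.

Lemma Pcc m x : vge 0 x -> Pc m x x.
Proof. by move=> h; rewrite /Pc h subrr vge0. Qed.

Lemma det_Pc m n (A B : 'M[F]_n) :
  mvge 0 A -> mvge 0 B -> mvge m (A - B) -> Pc m (\det A) (\det B).
Proof.
move=> hA hB hAB; rewrite /determinant.
apply: (big_ind2 (Pc m)); [exact: Pcc (vge0 0) | exact: PcD |] => s _.
apply: PcM; first by apply: Pcc; apply: vgeX; exact: vgeN1.
apply: (big_ind2 (Pc m)); [exact: Pcc vge1 | exact: PcM |] => i _.
apply/and3P; split; [exact: hA | exact: hB |].
by have := hAB i (perm.fun_of_perm s i); rewrite !mxE.
Qed.

Lemma det_int n (A : 'M[F]_n) : mvge 0 A -> vge 0 (\det A).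
Proof.
move=> h; have h0 : mvge 0 (A - A) by rewrite subrr; exact: mvge0.
by case/and3P: (det_Pc h h h0).
Qed.

Lemma det_cong m n (A B : 'M[F]_n) :
  mvge 0 A -> mvge 0 B -> mvge m (A - B) -> vge m (\det A - \det B).
Proof. by move=> hA hB hAB; case/and3P: (det_Pc hA hB hAB). Qed.

Definition isK (A : 'M[F]_3) := mvge 0 A /\ unitR (\det A).

Lemma isK1 : isK 1%:M.
Proof. by split; [exact: mvge1 | rewrite det1 unitR1]. Qed.

Lemma isK_mul A B : isK A -> isK B -> isK (A *m B).
Proof.
case=> hA uA [hB uB]; split; first exact: mvge_mul0.
by rewrite det_mulmx; apply: unitRM.
Qed.

Lemma unitR_neq0 x : unitR x -> x != 0.
Proof. by case/andP. Qed.

Lemma isK_unitmx A : isK A -> A \in unitmx.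
Proof. by case=> _ /unitR_neq0 h; rewrite unitmxE unitfE. Qed.

Lemma isK_inv A : isK A -> isK (invmx A).
Proof.
move=> hK; have uA := isK_unitmx hK; case: hK => hA dA; split; last first.
  by rewrite det_inv; apply: unitRV.
rewrite /invmx uA => i j; rewrite !mxE; apply: vgeM0.
  exact/unitR_vge/unitRV.
rewrite /cofactor; apply: vgeM0; first by apply: vgeX; exact: vgeN1.
by apply: det_int => a b; rewrite !mxE.
Qed.

Lemma isK_invl A : isK A -> invmx A *m A = 1%:M.
Proof. by move=> h; rewrite mulVmx // isK_unitmx. Qed.

Lemma isK_invr A : isK A -> A *m invmx A = 1%:M.
Proof. by move=> h; rewrite mulmxV // isK_unitmx. Qed.

Definition isKn (n : nat) (A : 'M[F]_3) := isK A /\ mvge n%:Z (A - 1%:M).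

Lemma isKn_of n A : (1 <= n)%N -> mvge 0 A -> mvge n%:Z (A - 1%:M) -> isKn n A.
Proof.
move=> n1 hA h; split => //; split => //.
have := det_cong hA (@mvge1 3) h; rewrite det1 => hc.
apply: (unitR_vge1_sub unitR1 (det_int hA)).
by apply: vge_le (hc); lia.
Qed.

Lemma isKn1 n : isKn n 1%:M.
Proof. by split; [exact: isK1 | rewrite subrr; exact: mvge0]. Qed.

Lemma isKn_mul n A B : isKn n A -> isKn n B -> isKn n (A *m B).
Proof.
case=> kA hA [kB hB]; split; first exact: isK_mul.
have -> : A *m B - 1%:M = (A - 1%:M) *m B + (B - 1%:M).
  by rewrite mulmxBl mul1mx addrA subrK.
by apply: mvgeD => //; apply: mvge_mulr => //; case: kB.
Qed.

Lemma isKn_inv n A : isKn n A -> isKn n (invmx A).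
Proof.
case=> kA hA; have kI := isK_inv kA; split => //.
have -> : invmx A - 1%:M = - (invmx A *m (A - 1%:M)).
  by rewrite mulmxBr isK_invl // mulmx1 opprB.
by apply: mvgeN; apply: mvge_mul0 => //; case: kI.
Qed.

Lemma isKn_K n A : isKn n A -> isK A.
Proof. by case. Qed.


Ltac natify A :=
  let B := fresh "B" in let E := fresh "E" in
  pose B := fun a b : nat => A (inord a) (inord b);
  (have E : forall a b, A a b = B a b by move=> a b; rewrite /B !inord_val);
  clearbody B; rewrite ?E /=.

Lemma mul3E (A B : 'M[F]_3) i j :
  (A *m B) i j = A i 0 * B 0 j + A i 1 * B 1 j + A i 2 * B 2 j.
Proof.
rewrite mxE !big_ord_recr big_ord0 /= add0r.
natify A; natify B; done.
Qed.

Lemma cof10 (A : 'M[F]_3) : cofactor A 1 0 = - (A 0 1 * A 2 2 - A 0 2 * A 2 1).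
Proof.
rewrite /cofactor (expand_det_row _ 0) !big_ord_recl big_ord0 /cofactor !det_mx11 !mxE.
natify A. rewrite !expr0 !expr1 /=. ring.
Qed.

Lemma cof20 (A : 'M[F]_3) : cofactor A 2 0 = A 0 1 * A 1 2 - A 0 2 * A 1 1.
Proof.
rewrite /cofactor (expand_det_row _ 0) !big_ord_recl big_ord0 /cofactor !det_mx11 !mxE.
natify A. rewrite !expr0 !expr1 /=. ring.
Qed.

Lemma cof21 (A : 'M[F]_3) : cofactor A 2 1 = - (A 0 0 * A 1 2 - A 0 2 * A 1 0).
Proof.
rewrite /cofactor (expand_det_row _ 0) !big_ord_recl big_ord0 /cofactor !det_mx11 !mxE.
natify A. rewrite !expr0 !expr1 /=. ring.
Qed.

Definition isK' (A : 'M[F]_3) :=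
  isK A /\ [&& vge 1 (A 0 1), vge 1 (A 0 2) & vge 1 (A 1 2)].

Lemma isK'_K A : isK' A -> isK A.
Proof. by case. Qed.

Lemma isK'1 : isK' 1%:M.
Proof. by split; [exact: isK1 | rewrite !mxE /= !vge0]. Qed.

Lemma isK'_mul A B : isK' A -> isK' B -> isK' (A *m B).
Proof.
case=> [[hA dA] /and3P [a1 a2 a3]] [[hB dB] /and3P [b1 b2 b3]].
split; first exact: isK_mul.
rewrite !mul3E; apply/and3P; split;
repeat (apply: vgeD); first [apply: vgeMr; by [|apply hB] | apply: vgeM0; by [|apply hA]].
Qed.

Lemma isK'_inv A : isK' A -> isK' (invmx A).
Proof.
move=> hK; have [kA /and3P [a1 a2 a3]] := hK.
split; first exact: isK_inv.
have uA := isK_unitmx kA; have [hA dA] := kA.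
have di : vge 0 (\det A)^-1 by apply/unitR_vge/unitRV.
rewrite /invmx uA !mxE cof10 cof20 cof21.
apply/and3P; split; apply: vgeM0 => //; rewrite ?vgeN; apply: vgeB;
  first [apply: vgeMr; by [|apply hA] | apply: vgeM0; by [|apply hA]].
Qed.

Notation W := (wmat w).

Lemma W3 : W *m W *m W = w%:M.
Proof.
apply/matrixP => i j; rewrite !mul3E !mxE.
case: i j => [[|[|[|i]]] Hi] [[|[|[|j]]] Hj] //=; rewrite ?mxE /=; ring.
Qed.

Lemma detW : \det W = w.
Proof. rewrite det3 !mxE /=. ring. Qed.

Definition cwm (A : 'M[F]_3) : 'M[F]_3 :=
  \matrix_(i < 3, j < 3) nth 0 (nth [::] [:: [:: A 2 2; w * A 2 0; w * A 2 1];
      [:: A 0 2 / w; A 0 0; A 0 1]; [:: A 1 2 / w; A 1 0; A 1 1]] i) j.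

Lemma cwmE A : W *m A = cwm A *m W.
Proof.
apply/matrixP => i j; rewrite !mul3E /cwm !mxE /=.
natify A.
case: i j => [[|[|[|i]]] Hi] [[|[|[|j]]] Hj] //=; try ring.
all: by rewrite ?mulr0 ?mul0r ?add0r ?addr0 ?mulr1 ?mul1r mulfVK.
Qed.

Lemma cwm_K' A : isK' A -> isK' (cwm A).
Proof.
case=> [[hA dA] /and3P [a1 a2 a3]].
have dd : \det (cwm A) = \det A.
  have := congr1 determinant (cwmE A); rewrite !det_mulmx detW => h.
  by apply: (mulIf w0); rewrite -h mulrC.
split; first split.
- move=> i j; rewrite /cwm mxE.
  have vw0 : vge 0 w by rewrite /vge vw orbT.
  case: i j => [[|[|[|i]]] Hi] [[|[|[|j]]] Hj] //=; rewrite ?vge0 //.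
  all: try first [exact: hA | apply: vge_divw; rewrite add0r; done | apply: vgeM0; [exact: vw0 | exact: hA]].
- by rewrite dd.
- rewrite /cwm !mxE /=; apply/and3P; split => //.
  + by have := vge_mulw (hA 2 0); rewrite add0r.
  + by have := vge_mulw (hA 2 1); rewrite add0r.
Qed.

Lemma Wpow_conj r A : isK' A -> exists B, isK' B /\ W ^+ r *m A = B *m W ^+ r.
Proof.
elim: r A => [|r IH] A hA; first by exists A; split => //; rewrite !expr0 mul1mx mulmx1.
have [B [hB eB]] := IH _ (cwm_K' hA).
exists B; split => //.
by rewrite exprSr -mulmxE -mulmxA cwmE mulmxA eB -mulmxA mulmxE -exprSr.
Qed.


Lemma Wpow3 : W ^+ 3 = w%:M.
Proof. by rewrite !exprS expr0 mulr1 -!mulmxE mulmxA W3. Qed.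

Lemma Wpow3r r : W ^+ (3 * r) = (w ^+ r)%:M.
Proof. by rewrite exprM Wpow3 rmorphXn. Qed.

Definition isX (h : 'M[F]_3) :=
  exists k r c, isK' k /\ c != 0 /\ h = c *: (k *m W ^+ r).

Lemma isX_K' k : isK' k -> isX k.
Proof. by move=> hk; exists k, 0%N, 1; rewrite expr0 mulmx1 scale1r oner_neq0. Qed.

Lemma isX_mul h1 h2 : isX h1 -> isX h2 -> isX (h1 *m h2).
Proof.
move=> [k1 [r1 [c1 [hk1 [c10 ->]]]]] [k2 [r2 [c2 [hk2 [c20 ->]]]]].
have [B [hB eB]] := Wpow_conj r1 hk2.
exists (k1 *m B), (r1 + r2)%N, (c1 * c2); split; first exact: isK'_mul.
split; first by rewrite mulf_neq0.
rewrite -scalemxAl -scalemxAr scalerA; congr (_ *: _).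
by rewrite exprD -mulmxE -[in LHS]mulmxA (mulmxA (W ^+ r1) k2) eB !mulmxA.
Qed.

Lemma isX_linv h : isX h -> exists h', isX h' /\ h' *m h = 1%:M.
Proof.
move=> [k [r [c [hk [c0 ->]]]]].
have hki := isK'_inv hk.
have [B [hB eB]] := Wpow_conj (2 * r) hki.
have wr0 : w ^+ r != 0 by rewrite expf_neq0.
exists ((c^-1 * (w ^+ r)^-1) *: (B *m W ^+ (2 * r))); split.
  by exists B, (2 * r)%N, (c^-1 * (w ^+ r)^-1); rewrite mulf_neq0 ?invr_eq0.
rewrite -scalemxAl -scalemxAr scalerA.
have -> : B *m W ^+ (2 * r) *m (k *m W ^+ r) = (w ^+ r)%:M.
  rewrite mulmxA -eB -(mulmxA _ (invmx k)) isK_invl ?mulmx1; last exact: isK'_K.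
  by rewrite mulmxE -exprD -Wpow3r; congr (_ ^+ _); lia.
rewrite scale_scalar_mx; congr (_%:M).
field; by rewrite ?c0 ?wr0.
Qed.


Lemma in_RE x : in_R v x <-> vge 0 x.
Proof. rewrite /in_R /vge; split; [by case=> [->|->]; rewrite ?eqxx ?orbT | by case/orP => [/eqP|]; auto]. Qed.

Lemma congrE k x y : congr_pow v k x y <-> vge k (x - y).
Proof. rewrite /congr_pow /vge; split; [by case=> [->|->]; rewrite ?eqxx ?orbT | by case/orP => [/eqP|]; auto]. Qed.

Lemma mat_RE A : mat_R v A <-> mvge 0 A.
Proof. by split => h i j; apply/in_RE. Qed.

Lemma inKE A : inK v A <-> isK A.
Proof.
split.
  case=> hA [d0 dv]; split; first exact/mat_RE.
  by rewrite /unitR d0 dv eqxx.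
by case=> hA /andP [d0 /eqP dv]; split; [exact/mat_RE | split].
Qed.

Lemma inKnE n A : inKn v n A <-> isKn n A.
Proof.
split.
  case=> /inKE hK h; split => // i j; have := h i j; move/congrE; by rewrite !mxE.
case=> hK h; split; first exact/inKE.
move=> i j; apply/congrE; have := h i j; by rewrite !mxE.
Qed.

Lemma inK'E A : inK' v A <-> isK' A.
Proof.
split.
  case=> /inKE hK h; split => //.
  by apply/and3P; split; [move: (h 0 1 isT) | move: (h 0 2 isT) | move: (h 1 2 isT)];
    move/congrE; rewrite subr0.
case=> hK /and3P [a1 a2 a3]; split; first exact/inKE.
move=> i j h; apply/congrE; rewrite subr0.
move: h a1 a2 a3; natify A.
by case: i j => [[|[|[|i]]] Hi] [[|[|[|j]]] Hj] //= _; rewrite ?vge0.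
Qed.


Lemma W2E : W *m W = \matrix_(i < 3, j < 3)
  nth 0 (nth [::] [:: [:: 0; w; 0]; [:: 0; 0; w]; [:: 1; 0; 0]] i) j.
Proof.
apply/matrixP => i j; rewrite mul3E !mxE.
by case: i j => [[|[|[|i]]] Hi] [[|[|[|j]]] Hj] //=; rewrite ?mxE /=; ring.
Qed.

Lemma vge_nat n : vge 0 (n%:R : F).
Proof. by elim: n => [|n IH]; rewrite ?vge0 // -addn1 natrD vgeD ?vge1. Qed.

Lemma sm0 : (0%:M : 'M[F]_3) = 0.
Proof. by apply/matrixP => i j; rewrite !mxE; case: (i == j). Qed.

Lemma isX_F'x h : isX h -> inK'F'x v w h.
Proof.
move=> [k [r [c [hk [c0 ->]]]]].
exists k, (c *: W ^+ r); split; first exact/inK'E.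
split; last by rewrite scalemxAr.
rewrite (divn_eq r 3) exprD mulnC Wpow3r -mulmxE mul_scalar_mx scalerA.
set a := c * w ^+ (r %/ 3).
have a0 : a != 0 by rewrite mulf_neq0 // expf_neq0.
have : (r %% 3 < 3)%N by rewrite ltn_mod.
case: (r %% 3)%N => [|[|[|s]]] // _.
- exists a, 0, 0; split; first by rewrite !xpair_eqE (negbTE a0).
  by rewrite !scale0r !addr0 expr0 scalemx1.
- exists 0, a, 0; split; first by rewrite !xpair_eqE (negbTE a0) andbF.
  by rewrite scale0r addr0 expr1 sm0 add0r.
- exists 0, 0, a; split; first by rewrite !xpair_eqE (negbTE a0) !andbF.
  by rewrite scale0r sm0 !add0r expr2 mulmxE.
Qed.

Definition uu (b c : F) : 'M[F]_3 := 1%:M + b *: W + c *: (W *m W).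

Lemma uuE b c : uu b c = \matrix_(i < 3, j < 3)
  nth 0 (nth [::] [:: [:: 1; c * w; b * w]; [:: b; 1; c * w]; [:: c; b; 1]] i) j.
Proof.
apply/matrixP => i j; rewrite /uu W2E !mxE.
by case: i j => [[|[|[|i]]] Hi] [[|[|[|j]]] Hj] //=; ring.
Qed.

Lemma uu_K' b c : vge 0 b -> vge 0 c -> isK' (uu b c).
Proof.
move=> hb hc; have vw0 : vge 0 w by rewrite /vge vw orbT.
have hw1 : vge 1 w by rewrite /vge vw lexx orbT.
have hw : forall x, vge 0 x -> vge 1 (x * w).
  by move=> x hx; rewrite mulrC; have := vge_mulw hx; rewrite add0r.
rewrite uuE; split; first split.
- move=> i j; rewrite mxE.
  by case: i j => [[|[|[|i]]] Hi] [[|[|[|j]]] Hj] //=; rewrite ?vge1 ?vge0 //;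
     apply: vgeM0.
- apply: (unitR_vge1_sub unitR1).
    apply: det_int => i j; rewrite mxE.
    by case: i j => [[|[|[|i]]] Hi] [[|[|[|j]]] Hj] //=; rewrite ?vge1 ?vge0 //;
     apply: vgeM0.
  rewrite det3 !mxE /=.
  have -> : 1 * (1 * 1 - c * w * b) - c * w * (b * 1 - c * w * c) +
    b * w * (b * b - 1 * c) - 1 = (b^+3 - 3%:R * b * c + w * c^+3) * w by ring.
  have h3 := vge_nat 3.
  have h1 := vge1; by apply: hw; repeat first [done | apply: vgeD | rewrite vgeN | apply: vgeM0 | apply: vgeX].
- by rewrite !mxE /=; apply/and3P; split; apply: hw.
Qed.


Lemma vge_quot x y : x != 0 -> (y == 0) || (v x <= v y) -> vge 0 (y / x).
Proof.
move=> x0; have [->|y0] := eqVneq y 0; first by rewrite mul0r vge0.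
rewrite /= /vge vMh ?invr_eq0 // vV // => h; apply/orP; right; lia.
Qed.

Lemma vwM x : x != 0 -> v (w * x) = 1 + v x.
Proof. by move=> x0; rewrite vMh // vw. Qed.

Lemma F'x_X f : inF'x w f -> isX f.
Proof.
move=> [a [b [c [h0 ->]]]].
have : [|| [&& a != 0, (b == 0) || (v a <= v b) & (c == 0) || (v a <= v c)],
   [&& b != 0, (a == 0) || (v b + 1 <= v a) & (c == 0) || (v b <= v c)] |
   [&& c != 0, (a == 0) || (v c + 1 <= v a) & (b == 0) || (v c + 1 <= v b)]].
  move: h0; rewrite !xpair_eqE.
  have [->|a0] := eqVneq a 0; have [->|b0] := eqVneq b 0; have [->|c0] := eqVneq c 0;
    rewrite ?eqxx //= => _; lia.
case/or3P => /and3P [x0 h1 h2].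
- exists (uu (b / a) (c / a)), 0%N, a; split; first by apply: uu_K'; apply: vge_quot.
  split => //; apply/matrixP => i j; rewrite [RHS]mxE expr0 mulmx1 uuE W2E !mxE.
  by case: i j => [[|[|[|i]]] Hi] [[|[|[|j]]] Hj] //=; rewrite ?mulr1n ?mulr0n; field; rewrite ?x0 ?w0.
- have wb0 : w * b != 0 by rewrite mulf_neq0.
  exists (uu (c / b) (a / (w * b))), 1%N, b; split.
    by apply: uu_K'; apply: vge_quot; rewrite // ?vwM //; rewrite addrC.
  split => //; apply/matrixP => i j; rewrite [RHS]mxE expr1 mul3E uuE W2E !mxE.
  by case: i j => [[|[|[|i]]] Hi] [[|[|[|j]]] Hj] //=; rewrite ?mulr1n ?mulr0n; field; rewrite ?x0 ?w0.
- have wc0 : w * c != 0 by rewrite mulf_neq0.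
  exists (uu (a / (w * c)) (b / (w * c))), 2%N, c; split.
    by apply: uu_K'; apply: vge_quot; rewrite // ?vwM //; rewrite addrC.
  split => //; apply/matrixP => i j; rewrite [RHS]mxE expr2 -mulmxE W2E mul3E uuE !mxE.
  by case: i j => [[|[|[|i]]] Hi] [[|[|[|j]]] Hj] //=; rewrite ?mulr1n ?mulr0n; field; rewrite ?x0 ?w0.
Qed.

Lemma isX_cell h : inK'F'x v w h -> isX h.
Proof.
move=> [k [f [/inK'E hk [hf ->]]]].
by apply: isX_mul; [exact: isX_K' | exact: F'x_X].
Qed.


Variables (l1 l2 l3 : int) (n : nat).
Hypothesis n1 : (1 <= n)%N.

Definition lv (i : 'I_3) : int := nth 0 [:: l1; l2; l3] i.
Definition ee (i j : 'I_3) : int := lv j - lv i + ((i < j)%N : nat)%:Z.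
Notation lam := (lam_mat w l1 l2 l3).

Lemma ee_tri i j k : ee i j <= ee i k + ee k j.
Proof.
rewrite /ee; have : ((i < j)%N <= (i < k)%N + (k < j)%N)%N.
  by case: (ltnP i k); case: (ltnP k j); case: (ltnP i j) => //=; lia.
lia.
Qed.

Lemma ee_sym i j : i != j -> ee i j + ee j i = 1.
Proof.
move=> ij; rewrite /ee; have : ((i < j)%N + (j < i)%N = 1)%N.
  by case: (ltngtP i j) => // h; move: ij; rewrite (val_inj h) eqxx.
lia.
Qed.

Lemma ee_ii i : ee i i = 0.
Proof. by rewrite /ee ltnn subrr. Qed.

Definition isH (g : 'M[F]_3) := isK g /\ forall i j, vge (ee i j) (g i j).

Lemma lamE_l (A : 'M[F]_3) i j : (lam *m A) i j = w ^ (lv i) * A i j.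
Proof.
rewrite mul3E /lam_mat !mxE; natify A.
by case: i j => [[|[|[|i]]] Hi] [[|[|[|j]]] Hj] //=; rewrite ?mul0r ?addr0 ?add0r.
Qed.

Lemma lamE_r (A : 'M[F]_3) i j : (A *m lam) i j = A i j * w ^ (lv j).
Proof.
rewrite mul3E /lam_mat !mxE; natify A.
by case: i j => [[|[|[|i]]] Hi] [[|[|[|j]]] Hj] //=; rewrite ?mulr0 ?addr0 ?add0r.
Qed.

Lemma det_lam : \det lam != 0.
Proof.
rewrite det3 /lam_mat !mxE /= ?(mulr0, mul0r, subr0, addr0).
by rewrite !mulf_neq0 ?wz_neq0.
Qed.

Lemma isH_lam g : isH g -> exists k, isK' k /\ lam *m g = k *m lam.
Proof.
case=> [[hg dg] he].
pose k := \matrix_(i < 3, j < 3) (w ^ (lv i - lv j) * g i j).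
have ek : lam *m g = k *m lam.
  apply/matrixP => i j; rewrite lamE_l lamE_r mxE mulrAC -expfzDr //.
  by rewrite subrK.
exists k; split => //.
have hk : forall i j : 'I_3, vge ((i < j)%N : nat)%:Z (k i j).
  move=> i j; rewrite mxE; have := vge_wz (lv i - lv j) (he i j).
  by rewrite /ee; have -> : lv i - lv j + (lv j - lv i + ((i < j)%N : nat)%:Z) = ((i < j)%N : nat)%:Z by lia.
split; first split.
- by move=> i j; apply: vge_le (hk i j); case: (i < j)%N.
- have := congr1 determinant ek; rewrite !det_mulmx => h.
  have -> : \det k = \det g by apply: (mulIf det_lam); rewrite -h mulrC.
  done.
- by apply/and3P; split; apply: (hk _ _).
Qed.

Lemma isH_K g : isH g -> isK g.
Proof. by case. Qed.

Lemma isH1 : isH 1%:M.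
Proof.
split; first exact: isK1.
move=> i j; rewrite mxE; have [->|ij] := eqVneq i j; first by rewrite ee_ii /= vge1.
by rewrite /= vge0.
Qed.

Lemma isH_mul g h : isH g -> isH h -> isH (g *m h).
Proof.
case=> kg hg [kh hh]; split; first exact: isK_mul.
move=> i j; rewrite mxE; apply: vge_sum => k _.
by apply: vge_le (ee_tri i j k) _; apply: vgeM.
Qed.

Definition reach (k k' : 'M[F]_3) :=
  exists g y, isH g /\ isKn n y /\ k' = g *m k *m y.

Lemma reach_refl k : reach k k.
Proof. by exists 1%:M, 1%:M; rewrite mul1mx mulmx1; split; [exact: isH1 | split; [exact: isKn1|]]. Qed.

Lemma reach_trans k1 k2 k3 : reach k1 k2 -> reach k2 k3 -> reach k1 k3.
Proof.
move=> [g [y [hg [hy ->]]]] [g' [y' [hg' [hy' ->]]]].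
exists (g' *m g), (y *m y'); split; first exact: isH_mul.
by split; [exact: isKn_mul | rewrite !mulmxA].
Qed.

Lemma reach_K k k' : isK k -> reach k k' -> isK k'.
Proof.
move=> hk [g [y [hg [hy ->]]]]; apply: isK_mul; last exact: isKn_K hy.
by apply: isK_mul => //; exact: isH_K.
Qed.

Lemma reach_op g k : isH g -> reach k (g *m k).
Proof. by move=> hg; exists g, 1%:M; rewrite mulmx1; split => //; split => //; exact: isKn1. Qed.

Lemma reach_Kn k D : isK k -> mvge n%:Z D -> reach k (k + D).
Proof.
move=> hk hD; have [hk0 _] := isK_inv hk.
exists 1%:M, (1%:M + invmx k *m D); split; first exact: isH1.
split; last by rewrite mul1mx mulmxDr mulmx1 mulmxA isK_invr // mul1mx.
apply: isKn_of => //.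
  apply: mvgeD; first exact: mvge1.
  by apply: mvge_mul0 => //; apply: mvge_le hD.
by rewrite [1%:M + _]addrC addrK; apply: mvge_mul0.
Qed.

Definition Eop (i j : 'I_3) (x : F) : 'M[F]_3 := 1%:M + x *: delta_mx i j.

Lemma EopE (i j : 'I_3) x (k : 'M[F]_3) r c :
  (Eop i j x *m k) r c = k r c + (r == i)%:R * (x * k j c).
Proof.
rewrite mulmxDl mul1mx -scalemxAl [in LHS]mxE; congr (_ + _).
rewrite mxE [(delta_mx i j *m k) r c]mxE (bigD1 j) //= big1 ?addr0 => [|l /negbTE lj]; last by rewrite mxE lj andbF mul0r.
by rewrite mxE eqxx andbT mulrCA.
Qed.

Lemma EopE_ne i j x (k : 'M[F]_3) r c : r != i -> (Eop i j x *m k) r c = k r c.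
Proof. by move=> ri; rewrite EopE (negbTE ri) mul0r addr0. Qed.

Lemma EopE_eq (i j : 'I_3) x (k : 'M[F]_3) c : (Eop i j x *m k) i c = k i c + x * k j c.
Proof. by rewrite EopE eqxx mul1r. Qed.

Lemma Eop_entries i j x r c :
  Eop i j x r c = (r == c)%:R + x * ((r == i) && (c == j))%:R.
Proof. by rewrite !mxE. Qed.

Lemma det_Eop i j x : \det (Eop i j x) = if i == j then 1 + x else 1.
Proof.
rewrite det3 !mxE.
by case: i j => [[|[|[|i]]] Hi] [[|[|[|j]]] Hj] //=; ring.
Qed.

Lemma isH_Eop i j x : i != j -> vge 0 x -> vge (ee i j) x -> isH (Eop i j x).
Proof.
move=> ij h0 he; split; first split.
- move=> r c; rewrite Eop_entries; apply: vgeD; first by case: (r == c); rewrite ?vge1 ?vge0.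
  by apply: vgeMr => //; case: (_ && _); rewrite ?vge1 ?vge0.
- by rewrite det_Eop (negbTE ij) unitR1.
move=> r c; rewrite Eop_entries.
have [rc|rc] := eqVneq r c.
  rewrite rc ee_ii /=; apply: vgeD; first exact: vge1.
  by apply: vgeMr => //; case: (_ && _); rewrite ?vge1 ?vge0.
rewrite /= add0r.
have [h|h] := boolP ((r == i) && (c == j)); last by rewrite /= mulr0 vge0.
by case/andP: h => /eqP -> /eqP ->; rewrite /= mulr1.
Qed.

Lemma Eop_scaleE i u r c :
  Eop i i (u - 1) r c = if r == c then (if r == i then u else 1) else 0.
Proof.
rewrite Eop_entries.
have [<-|rc] := eqVneq r c.
  by have [_|ri] := eqVneq r i; rewrite /= ?mulr1 ?mulr0 ?addr0 // addrC subrK.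
have -> : (r == i) && (c == i) = false.
  by apply/negbTE; apply: contra rc => /andP [/eqP -> /eqP ->].
by rewrite /= mulr0 addr0.
Qed.

Lemma isH_scale i u : unitR u -> isH (Eop i i (u - 1)).
Proof.
move=> hu; split; first split.
- move=> r c; rewrite Eop_scaleE.
  by case: (r == c); case: (r == i); rewrite ?vge0 ?vge1 ?unitR_vge.
- by rewrite det_Eop eqxx addrC subrK.
move=> r c; rewrite Eop_scaleE.
have [<-|rc] := eqVneq r c; last by rewrite vge0.
by rewrite ee_ii; case: (r == i); rewrite ?vge0 ?vge1 ?unitR_vge.
Qed.


Fixpoint Dg (s : seq F) (m : nat) : seq F :=
  if m is m'.+1 then [seq a + w * d | a <- s, d <- Dg s m'] else [:: 0].

Lemma size_Dg s m : size (Dg s m) = (size s ^ m)%N.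
Proof. by elim: m => [|m IH] //=; rewrite size_allpairs IH expnS. Qed.

Definition Dig s (m : nat) (f : bool) := if f then [seq w * d | d <- Dg s m.-1] else Dg s m.

Lemma size_Dig s m f : size (Dig s m f) = (size s ^ (m - f))%N.
Proof. by case: f; rewrite /Dig ?size_map size_Dg ?subn0 ?subn1. Qed.

Definition res_ok (s : seq F) :=
  (forall y, y \in s -> vge 0 y) /\ (forall x, vge 0 x -> exists2 y, y \in s & vge 1 (x - y)).

Lemma Dg_cover s m x : res_ok s -> vge 0 x -> exists2 d, d \in Dg s m & vge m%:Z (x - d) && vge 0 d.
Proof.
move=> [hs1 hs2]; elim: m x => [|m IH] x hx.
  by exists 0; rewrite ?inE // subr0 hx vge0.
have [y ys hy] := hs2 x hx.
have hx' : vge 0 ((x - y) / w) by apply: vge_divw; rewrite add0r.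
have [d dD /andP [hd1 hd2]] := IH _ hx'.
exists (y + w * d); first by apply: allpairs_f.
apply/andP; split.
  have -> : x - (y + w * d) = w * ((x - y) / w - d).
    by rewrite mulrBr mulrCA divff // mulr1 opprD addrA.
  by have := vge_mulw hd1; rewrite -addn1 PoszD.
apply: vgeD; [exact: hs1 | apply: vgeM0 => //; by rewrite /vge vw orbT].
Qed.

Lemma Dig_cover s m (f : bool) x : res_ok s -> (0 < m)%N -> vge 0 x -> (f -> vge 1 x) ->
  exists2 d, d \in Dig s m f & vge m%:Z (x - d) && vge 0 d.
Proof.
move=> hs m0 hx hf; case: f hf => hf; last exact: Dg_cover.
have hx' : vge 0 (x / w) by apply: vge_divw; rewrite add0r; exact: hf.
have [d dD /andP [hd1 hd2]] := Dg_cover m.-1 hs hx'.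
exists (w * d); first exact: map_f.
apply/andP; split.
  have -> : x - w * d = w * (x / w - d) by rewrite mulrBr mulrCA divff // mulr1.
  have e : m%:Z = m.-1%:Z + 1 by lia.
  by rewrite e; apply: vge_mulw.
by apply: vgeM0 => //; rewrite /vge vw orbT.
Qed.

Lemma row_has_unit k r : isK k -> exists c, unitR (k r c).
Proof.
case=> hk dk; case: (pickP (fun c => unitR (k r c))) => [c hc|h]; first by exists c.
have : vge 1 (\det k).
  rewrite (expand_det_row _ r); apply: vge_sum => c _; apply: vgeMr.
    by apply: nonunit_vge1; [exact: hk | rewrite h].
  rewrite /cofactor; apply: vgeM0; first by apply: vgeX; exact: vgeN1.
  by apply: det_int => a b; rewrite !mxE.
by case/andP: dk => d0 /eqP dv; rewrite /vge (negbTE d0) dv.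
Qed.

Lemma first_unit (x : 'I_3 -> F) (S : pred 'I_3) :
  (forall c, vge 0 (x c)) -> (exists c, S c && unitR (x c)) ->
  exists c0, [/\ S c0, unitR (x c0) & forall c, S c -> (c < c0)%N -> vge 1 (x c)].
Proof.
move=> hx [c1 hc1]; case: (@arg_minnP _ c1 (fun c => S c && unitR (x c)) (fun c : 'I_3 => nat_of_ord c) hc1) => c0 hc0 hmin.
exists c0; case/andP: hc0 => S0 U0; split => // c Sc lt.
apply: nonunit_vge1 => //; apply/negP => Uc.
by have := hmin c; rewrite Sc Uc => /(_ isT); rewrite leqNgt lt.
Qed.

Lemma third (a b : 'I_3) : a != b -> exists c : 'I_3, [/\ c != a, c != b & forall x : 'I_3, [|| x == a, x == b | x == c]].
Proof.
case: a b => [[|[|[|a]]] Ha] [[|[|[|b]]] Hb] //= _;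
  [exists 2 | exists 1 | exists 2 | exists 0 | exists 1 | exists 0].
all: by split => // -[[|[|[|x]]] Hx].
Qed.


Definition mkT (p0 p1 p2 c0 c1 c2 : 'I_3) (d01 d02 d12 : F) : 'M[F]_3 :=
  \matrix_(r < 3, c < 3) if r == p0 then (if c == c0 then 1 else if c == c1 then d01 else d02)
    else if r == p1 then (if c == c0 then 0 else if c == c1 then 1 else d12)
    else (if c == c2 then 1 else 0).

Lemma deltaE (k : 'M[F]_3) x i c0 r c :
  (k + x *: delta_mx i c0) r c = k r c + x * ((r == i) && (c == c0))%:R.
Proof. by rewrite !mxE. Qed.

Lemma scaleE (k : 'M[F]_3) i u c : (Eop i i (u - 1) *m k) i c = u * k i c.
Proof. rewrite EopE_eq; ring. Qed.

Definition mn (e : int) : nat := `|Num.min e n%:Z|%N.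

Lemma mnE e : 1 <= e -> (mn e)%:Z = Num.min e n%:Z /\ (0 < mn e)%N.
Proof. rewrite /mn => he; split; lia. Qed.

Lemma adjust (k : 'M[F]_3) i j cj x : isK k -> i != j ->
  (forall c, k j c = (c == cj)%:R) -> 1 <= ee i j -> vge (mn (ee i j))%:Z x ->
  reach k (k + x *: delta_mx i cj).
Proof.
move=> hk ij hrow he; have [me _] := mnE he; rewrite me => hx.
have hx0 : vge 0 x by apply: vge_le hx; lia.
have [le|lt] := lerP (ee i j) n%:Z.
  have -> : k + x *: delta_mx i cj = Eop i j x *m k.
    apply/matrixP => r c; rewrite EopE deltaE hrow.
    by case: (r == i); case: (c == cj); rewrite /= ?mulr1 ?mulr0 ?mul0r ?mul1r.
  apply: reach_op; apply: isH_Eop => //.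
  by move: hx; have -> : Num.min (ee i j) n%:Z = ee i j by lia.
apply: reach_Kn => // r c; rewrite !mxE; apply: vgeMr; last by case: (_ && _); rewrite ?vge0 ?vge1.
by move: hx; have -> : Num.min (ee i j) n%:Z = n%:Z by lia.
Qed.

Lemma adjust2 (k : 'M[F]_3) i j c0 c1 c2 x : isK k -> i != j -> c1 != c0 -> c1 != c2 ->
  k j c0 = 0 -> k j c1 = 1 -> vge 0 (k j c2) -> 1 <= ee i j -> vge (mn (ee i j))%:Z x ->
  exists k', [/\ reach k k', forall r c, r != i -> k' r c = k r c,
    k' i c0 = k i c0, k' i c1 = k i c1 + x &
    exists2 z, k' i c2 = k i c2 + z & vge 1 z].
Proof.
move=> hk ij c10 c12 e0 e1 e2 he; have [me _] := mnE he; rewrite me => hx.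
have hx0 : vge 0 x by apply: vge_le hx; lia.
have hx1 : vge 1 x by apply: vge_le hx; lia.
have [le|lt] := lerP (ee i j) n%:Z.
  exists (Eop i j x *m k); split.
  - apply: reach_op; apply: isH_Eop => //.
    by move: hx; have -> : Num.min (ee i j) n%:Z = ee i j by lia.
  - by move=> r c ri; rewrite EopE_ne.
  - by rewrite EopE_eq e0 mulr0 addr0.
  - by rewrite EopE_eq e1 mulr1.
  - by exists (x * k j c2); [rewrite EopE_eq | apply: vgeMr].
exists (k + x *: delta_mx i c1); split.
- apply: reach_Kn => // r c; rewrite !mxE; apply: vgeMr; last by case: (_ && _); rewrite ?vge0 ?vge1.
  by move: hx; have -> : Num.min (ee i j) n%:Z = n%:Z by lia.
- by move=> r c ri; rewrite deltaE (negbTE ri) mulr0 addr0.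
- by rewrite deltaE eqxx eq_sym (negbTE c10) mulr0 addr0.
- by rewrite deltaE !eqxx mulr1.
- by exists 0; rewrite ?vge0 // deltaE eqxx [c2 == c1]eq_sym (negbTE c12) mulr0.
Qed.


Lemma free_op i j x : i != j -> 1 <= ee j i -> vge 0 x -> isH (Eop i j x).
Proof.
move=> ij he hx; apply: isH_Eop => //; apply: vge_le hx.
have := ee_sym ij; lia.
Qed.

Lemma cover_rows (p0 p1 p2 : 'I_3) : p0 != p1 -> p0 != p2 -> p1 != p2 ->
  forall r, [|| r == p0, r == p1 | r == p2].
Proof.
move=> h01 h02 h12; have [c [c0 c1 hc]] := third h01.
have : p2 == c by move: (hc p2); rewrite eq_sym (negbTE h02) eq_sym (negbTE h12).
by move/eqP => ->.
Qed.

Lemma cover s (hs : res_ok s) (p0 p1 p2 : 'I_3) (h01 : p0 != p1) (h02 : p0 != p2) (h12 : p1 != p2)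
  (hA : 1 <= ee p0 p1) (hB : 1 <= ee p1 p2) (hC : 1 <= ee p0 p2) (k : 'M[F]_3) : isK k ->
  exists (c0 c1 c2 : 'I_3) (d01 d02 d12 : F), [/\ [&& c0 != c1, c0 != c2 & c1 != c2],
   d01 \in Dig s (mn (ee p0 p1)) (c1 < c0)%N, d02 \in Dig s (mn (ee p0 p2)) (c2 < c0)%N,
   d12 \in Dig s (mn (ee p1 p2)) (c2 < c1)%N & reach k (mkT p0 p1 p2 c0 c1 c2 d01 d02 d12)].
Proof.
move=> hk; have [hkR _] := hk.
have h10 : p1 != p0 by rewrite eq_sym.
have h20 : p2 != p0 by rewrite eq_sym.
have h21 : p2 != p1 by rewrite eq_sym.
have [c0 [_ u0U B0]] : exists c0, [/\ predT c0, unitR (k p0 c0) &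
    forall c : 'I_3, predT c -> (c < c0)%N -> vge 1 (k p0 c)].
  apply: first_unit => //; have [c hc] := row_has_unit p0 hk; by exists c.
pose u0 := k p0 c0.
pose k1 := Eop p0 p0 (u0^-1 - 1) *m k.
have r01 : reach k k1 by apply: reach_op; apply: isH_scale; apply: unitRV.
have k1K := reach_K hk r01.
have k1p0 : forall c, k1 p0 c = u0^-1 * k p0 c by move=> c; exact: scaleE.
have k1r : forall r c, r != p0 -> k1 r c = k r c by move=> r c h; exact: EopE_ne.
have k1p0c0 : k1 p0 c0 = 1 by rewrite k1p0 mulVf // unitR_neq0.
have B0' : forall c : 'I_3, (c < c0)%N -> vge 1 (k1 p0 c).
  move=> c lt; rewrite k1p0; apply: vgeM0; last exact: B0.
  exact/unitR_vge/unitRV.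
pose k2 := Eop p1 p0 (- k1 p1 c0) *m k1.
have r12 : reach k1 k2 by apply: reach_op; apply: free_op => //; rewrite vgeN; case: k1K.
have k2K := reach_K k1K r12.
have k2p1 : forall c, k2 p1 c = k1 p1 c + - k1 p1 c0 * k1 p0 c by move=> c; exact: EopE_eq.
have k2r : forall r c, r != p1 -> k2 r c = k1 r c by move=> r c h; exact: EopE_ne.
have k2p1c0 : k2 p1 c0 = 0 by rewrite k2p1 k1p0c0 mulr1 subrr.
pose k3 := Eop p2 p0 (- k2 p2 c0) *m k2.
have r23 : reach k2 k3 by apply: reach_op; apply: free_op => //; rewrite vgeN; case: k2K.
have k3K := reach_K k2K r23.
have k3p2 : forall c, k3 p2 c = k2 p2 c + - k2 p2 c0 * k2 p0 c by move=> c; exact: EopE_eq.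
have k3r : forall r c, r != p2 -> k3 r c = k2 r c by move=> r c h; exact: EopE_ne.
have k3p2c0 : k3 p2 c0 = 0 by rewrite k3p2 (k2r p0) // k1p0c0 mulr1 subrr.
have k3p1c0 : k3 p1 c0 = 0 by rewrite k3r.
have [c1 [c1c0 u1U B1]] : exists c1, [/\ c1 != c0, unitR (k3 p1 c1) &
    forall c : 'I_3, c != c0 -> (c < c1)%N -> vge 1 (k3 p1 c)].
  apply: first_unit => //; first by move=> c; case: k3K.
  have [c hc] := row_has_unit p1 k3K; exists c; rewrite hc andbT.
  by apply: contraTneq hc => ->; rewrite k3p1c0 /unitR eqxx.
pose u1 := k3 p1 c1.
pose k4 := Eop p1 p1 (u1^-1 - 1) *m k3.
have r34 : reach k3 k4 by apply: reach_op; apply: isH_scale; apply: unitRV.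
have k4K := reach_K k3K r34.
have k4p1 : forall c, k4 p1 c = u1^-1 * k3 p1 c by move=> c; exact: scaleE.
have k4r : forall r c, r != p1 -> k4 r c = k3 r c by move=> r c h; exact: EopE_ne.
have k4p1c1 : k4 p1 c1 = 1 by rewrite k4p1 mulVf // unitR_neq0.
have k4p1c0 : k4 p1 c0 = 0 by rewrite k4p1 k3p1c0 mulr0.
have B1' : forall c : 'I_3, c != c0 -> (c < c1)%N -> vge 1 (k4 p1 c).
  move=> c cc lt; rewrite k4p1; apply: vgeM0; last exact: B1.
  exact/unitR_vge/unitRV.
pose k5 := Eop p2 p1 (- k4 p2 c1) *m k4.
have r45 : reach k4 k5 by apply: reach_op; apply: free_op => //; rewrite vgeN; case: k4K.
have k5K := reach_K k4K r45.
have k5p2 : forall c, k5 p2 c = k4 p2 c + - k4 p2 c1 * k4 p1 c by move=> c; exact: EopE_eq.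
have k5r : forall r c, r != p2 -> k5 r c = k4 r c by move=> r c h; exact: EopE_ne.
have k5p2c1 : k5 p2 c1 = 0 by rewrite k5p2 k4p1c1 mulr1 subrr.
have k5p2c0 : k5 p2 c0 = 0 by rewrite k5p2 k4p1c0 mulr0 addr0 k4r // k3p2c0.
have c01 : c0 != c1 by rewrite eq_sym.
have [c2 [c20 c21 ccov]] := third c01.
have u2U : unitR (k5 p2 c2).
  have [c hc] := row_has_unit p2 k5K.
  have /or3P [/eqP e|/eqP e|/eqP e] := ccov c; move: hc; rewrite e //.
    by rewrite k5p2c0 /unitR eqxx.
  by rewrite k5p2c1 /unitR eqxx.
pose u2 := k5 p2 c2.
pose k6 := Eop p2 p2 (u2^-1 - 1) *m k5.
have r56 : reach k5 k6 by apply: reach_op; apply: isH_scale; apply: unitRV.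
have k6K := reach_K k5K r56.
have k6r : forall r c, r != p2 -> k6 r c = k5 r c by move=> r c h; exact: EopE_ne.
have k6p2 : forall c, k6 p2 c = (c == c2)%:R.
  move=> c; rewrite [LHS]scaleE.
  have /or3P [/eqP ->|/eqP ->|/eqP ->] := ccov c.
  - by rewrite k5p2c0 mulr0 eq_sym (negbTE c20).
  - by rewrite k5p2c1 mulr0 eq_sym (negbTE c21).
  - by rewrite mulVf ?eqxx // unitR_neq0.
have k6p1 : forall c, k6 p1 c = k4 p1 c by move=> c; rewrite k6r // k5r.
have k6p0 : forall c, k6 p0 c = k1 p0 c.
  by move=> c; rewrite k6r // k5r // k4r // k3r // k2r.
have ep01 := negbTE h01; have ep10 := negbTE h10; have ep02 := negbTE h02.
have ep20 := negbTE h20; have ep12 := negbTE h12; have ep21 := negbTE h21.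
have c02 : c0 != c2 by rewrite eq_sym. have c12 : c1 != c2 by rewrite eq_sym.
have ec01 := negbTE c01; have ec10 := negbTE c1c0; have ec02 := negbTE c02.
have ec20 := negbTE c20; have ec12 := negbTE c12; have ec21 := negbTE c21.
pose x12 := k6 p1 c2.
have x12R : vge 0 x12 by case: k6K => h _; apply: h.
have x12f : (c2 < c1)%N -> vge 1 x12 by move=> lt; rewrite /x12 k6p1; apply: B1'.
have [mB mB0] := mnE hB.
have [d12 d12D /andP [hd12 hd12R]] := @Dig_cover s (mn (ee p1 p2)) (c2 < c1)%N _ hs mB0 x12R x12f.
pose k7 := k6 + (d12 - x12) *: delta_mx p1 c2.
have r67 : reach k6 k7 by apply: (adjust k6K h12 k6p2 hB); rewrite -opprB vgeN.
have k7K := reach_K k6K r67.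
have k7E : forall r c, k7 r c = k6 r c + (d12 - x12) * ((r == p1) && (c == c2))%:R.
  by move=> r c; exact: deltaE.
have k7p1c0 : k7 p1 c0 = 0 by rewrite k7E eqxx ec02 mulr0 addr0 k6p1 k4p1c0.
have k7p1c1 : k7 p1 c1 = 1 by rewrite k7E eqxx ec12 mulr0 addr0 k6p1 k4p1c1.
have k7p1c2 : k7 p1 c2 = d12 by rewrite k7E !eqxx mulr1 addrC subrK.
have k7p0 : forall c, k7 p0 c = k1 p0 c by move=> c; rewrite k7E ep01 mulr0 addr0 k6p0.
have k7p2 : forall c, k7 p2 c = (c == c2)%:R by move=> c; rewrite k7E ep21 mulr0 addr0 k6p2.
pose x01 := k7 p0 c1.
have x01R : vge 0 x01 by case: k7K => h _; apply: h.
have x01f : (c1 < c0)%N -> vge 1 x01 by move=> lt; rewrite /x01 k7p0; apply: B0'.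
have [mA mA0] := mnE hA.
have [d01 d01D /andP [hd01 hd01R]] := @Dig_cover s (mn (ee p0 p1)) (c1 < c0)%N _ hs mA0 x01R x01f.
have hx01 : vge (mn (ee p0 p1))%:Z (d01 - x01) by rewrite -opprB vgeN.
have k7p1c2R : vge 0 (k7 p1 c2) by rewrite k7p1c2.
have [k8 [r78 k8r k8c0 k8c1 [z k8c2 hz]]] :=
  adjust2 k7K h01 c1c0 c12 k7p1c0 k7p1c1 k7p1c2R hA hx01.
have k8K := reach_K k7K r78.
have k8p0c0 : k8 p0 c0 = 1 by rewrite k8c0 k7p0 k1p0c0.
have k8p0c1 : k8 p0 c1 = d01 by rewrite k8c1 /x01 addrC subrK.
have k8p1 : forall c, k8 p1 c = k7 p1 c by move=> c; rewrite k8r.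
have k8p2 : forall c, k8 p2 c = (c == c2)%:R by move=> c; rewrite k8r // k7p2.
pose x02 := k8 p0 c2.
have x02R : vge 0 x02 by case: k8K => h _; apply: h.
have x02f : (c2 < c0)%N -> vge 1 x02.
  by move=> lt; rewrite /x02 k8c2 k7p0; apply: vgeD => //; apply: B0'.
have [mC mC0] := mnE hC.
have [d02 d02D /andP [hd02 hd02R]] := @Dig_cover s (mn (ee p0 p2)) (c2 < c0)%N _ hs mC0 x02R x02f.
pose k9 := k8 + (d02 - x02) *: delta_mx p0 c2.
have r89 : reach k8 k9 by apply: (adjust k8K h02 k8p2 hC); rewrite -opprB vgeN.
exists c0, c1, c2, d01, d02, d12; split => //; first by rewrite c01 c02 c12.
suff -> : mkT p0 p1 p2 c0 c1 c2 d01 d02 d12 = k9.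
  apply: (reach_trans r01); apply: (reach_trans r12); apply: (reach_trans r23).
  apply: (reach_trans r34); apply: (reach_trans r45); apply: (reach_trans r56).
  apply: (reach_trans r67); exact: (reach_trans r78).
apply/matrixP => r c; rewrite /k9 deltaE mxE.
have /or3P [/eqP ->|/eqP ->|/eqP ->] := cover_rows h01 h02 h12 r;
have /or3P [/eqP ->|/eqP ->|/eqP ->] := ccov c;
rewrite ?eqxx ?ep01 ?ep10 ?ep02 ?ep20 ?ep12 ?ep21 ?ec01 ?ec10 ?ec02 ?ec20 ?ec12 ?ec21 /=
  ?mulr0 ?mulr1 ?addr0 ?k8p0c0 ?k8p0c1 ?k8p1 ?k8p2 ?k7p1c0 ?k7p1c1 ?k7p1c2
  ?eqxx ?ec01 ?ec10 ?ec02 ?ec20 ?ec12 ?ec21 //.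
by rewrite /x02 addrC subrK.
Qed.


Definition o0 : 'I_3 := @Ordinal 3 0 isT.
Definition o1 : 'I_3 := @Ordinal 3 1 isT.
Definition o2 : 'I_3 := @Ordinal 3 2 isT.
Definition ords : seq 'I_3 := [:: o0; o1; o2].

Lemma mem_ords c : c \in ords.
Proof. by case: c => [[|[|[|c]]] Hc] //; rewrite !inE. Qed.

Section T.
Variables (s : seq F) (p0 p1 p2 : 'I_3) (a b c : nat).

Definition Tl (c0 c1 c2 : 'I_3) : seq 'M[F]_3 :=
  if [&& c0 != c1, c0 != c2 & c1 != c2] then
  [seq mkT p0 p1 p2 c0 c1 c2 x yz.1 yz.2 | x <- Dig s a (c1 < c0)%N,
     yz <- [seq (y, z) | y <- Dig s c (c2 < c0)%N, z <- Dig s b (c2 < c1)%N]]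
  else [::].

Definition triples : seq ('I_3 * 'I_3 * 'I_3) :=
  [seq (t.1, t.2.1, t.2.2) | t <- [seq (x, yz) | x <- ords, yz <- [seq (y, z) | y <- ords, z <- ords]]].

Definition Tall : seq 'M[F]_3 := flatten [seq Tl t.1.1 t.1.2 t.2 | t <- triples].

Lemma mem_Tall (c0 c1 c2 : 'I_3) d01 d02 d12 : [&& c0 != c1, c0 != c2 & c1 != c2] ->
  d01 \in Dig s a (c1 < c0)%N -> d02 \in Dig s c (c2 < c0)%N -> d12 \in Dig s b (c2 < c1)%N ->
  mkT p0 p1 p2 c0 c1 c2 d01 d02 d12 \in Tall.
Proof.
move=> hd h1 h2 h3; apply/flatten_mapP; exists (c0, c1, c2).
  apply/mapP; exists (c0, (c1, c2)) => //.
  by apply: allpairs_f; [exact: mem_ords | apply: allpairs_f; exact: mem_ords].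
rewrite /Tl hd /=.
apply/allpairsP; exists (d01, (d02, d12)); split => //; apply/allpairsP; by exists (d02, d12).
Qed.

Lemma size_Tl (c0 c1 c2 : 'I_3) : size (Tl c0 c1 c2) =
  if [&& c0 != c1, c0 != c2 & c1 != c2] then
    (size s ^ (a - (c1 < c0)%N) * (size s ^ (c - (c2 < c0)%N) * size s ^ (b - (c2 < c1)%N)))%N
  else 0%N.
Proof. by rewrite /Tl; case: ifP => //= _; rewrite !size_allpairs !size_Dig. Qed.

Lemma size_Tall : (0 < a)%N -> (0 < b)%N -> (0 < c)%N ->
  size Tall = (size s ^ (a.-1 + b.-1 + c.-1) *
     (size s ^ 3 + 2 * size s ^ 2 + 2 * size s + 1))%N.
Proof.
move=> ha hb hc; rewrite /Tall size_flatten /shape -map_comp /triples -map_comp.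
rewrite /ords /= !size_Tl /=.
case: a ha => // a' _; case: b hb => // b' _; case: c hc => // c' _.
rewrite /= !subn0 !subn1 /= !expnS !expnD.
set Q := size s.
ring.
Qed.

End T.


Lemma order_exists (j : nat) (E : int) : l1 + l2 + l3 = 0 -> (j %% 3 != 1)%N ->
  ((j %% 3 = 2)%N ->
     Num.max (l1 - l2) (Num.max (l2 - l3) (l3 - l1 + 1)) <= n%:Z - (j %/ 3)%:Z - 1) ->
  ((j %% 3 = 0)%N ->
     Num.max (l2 - l1) (Num.max (l3 - l2) (l1 - l3 - 1)) <= n%:Z - (j %/ 3)%:Z - 1) ->
  E = (if (j %% 3 == 0)%N then 3 * n%:Z - 2 * (j %/ 3)%:Z else 3 * n%:Z - 2 * (j %/ 3)%:Z - 2) ->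
  exists p0 p1 p2 : 'I_3, [/\ [&& p0 != p1, p0 != p2 & p1 != p2],
     [/\ 1 <= ee p0 p1, 1 <= ee p1 p2 & 1 <= ee p0 p2] &
     (mn (ee p0 p1))%:Z + (mn (ee p1 p2))%:Z + (mn (ee p0 p2))%:Z <= E].
Proof.
move=> hs hj h2 h0 ->.
have hr : (j %% 3 = 0)%N \/ (j %% 3 = 2)%N by move: hj; have := ltn_pmod j (isT : (0 < 3)%N); lia.
move: h2 h0 hj hr; set i := (j %/ 3)%N; set r := (j %% 3)%N => h2 h0 hj hr.
set RHS := (if r == 0%N then _ else _).
have fin : forall p0 p1 p2 : 'I_3, [&& p0 != p1, p0 != p2 & p1 != p2] ->
   1 <= ee p0 p1 -> 1 <= ee p1 p2 -> 1 <= ee p0 p2 ->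
   Num.min (ee p0 p1) n%:Z + Num.min (ee p1 p2) n%:Z + Num.min (ee p0 p2) n%:Z <= RHS ->
   exists p0 p1 p2 : 'I_3, [/\ [&& p0 != p1, p0 != p2 & p1 != p2],
     [/\ 1 <= ee p0 p1, 1 <= ee p1 p2 & 1 <= ee p0 p2] &
     (mn (ee p0 p1))%:Z + (mn (ee p1 p2))%:Z + (mn (ee p0 p2))%:Z <= RHS].
  move=> p0 p1 p2 hd a b c h; exists p0, p1, p2; split => //.
  by rewrite (mnE a).1 (mnE b).1 (mnE c).1.
have key : [/\ 1 <= ee o0 o1, 1 <= ee o1 o2 & 1 <= ee o0 o2] \/
            [/\ 1 <= ee o0 o2, 1 <= ee o2 o1 & 1 <= ee o0 o1] \/
            [/\ 1 <= ee o1 o0, 1 <= ee o0 o2 & 1 <= ee o1 o2] \/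
            [/\ 1 <= ee o1 o2, 1 <= ee o2 o0 & 1 <= ee o1 o0] \/
            [/\ 1 <= ee o2 o0, 1 <= ee o0 o1 & 1 <= ee o2 o1] \/
            [/\ 1 <= ee o2 o1, 1 <= ee o1 o0 & 1 <= ee o2 o0].
  rewrite /ee /lv /=.
  have [h12|h12] := lerP l1 l2; have [h23|h23] := lerP l2 l3; have [h13|h13] := lerP l1 l3.
  all: try first [by left; split; lia | by right; left; split; lia
    | by right; right; left; split; lia | by right; right; right; left; split; lia
    | by right; right; right; right; left; split; lia | by right; right; right; right; right; split; lia].
case: key => [[a b c]|[[a b c]|[[a b c]|[[a b c]|[[a b c]|[a b c]]]]]].
- apply: (fin o0 o1 o2) => //; move: a b c h2 h0; rewrite /RHS /ee /lv /=; case: hr => -> /=; lia.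
- apply: (fin o0 o2 o1) => //; move: a b c h2 h0; rewrite /RHS /ee /lv /=; case: hr => -> /=; lia.
- apply: (fin o1 o0 o2) => //; move: a b c h2 h0; rewrite /RHS /ee /lv /=; case: hr => -> /=; lia.
- apply: (fin o1 o2 o0) => //; move: a b c h2 h0; rewrite /RHS /ee /lv /=; case: hr => -> /=; lia.
- apply: (fin o2 o0 o1) => //; move: a b c h2 h0; rewrite /RHS /ee /lv /=; case: hr => -> /=; lia.
- apply: (fin o2 o1 o0) => //; move: a b c h2 h0; rewrite /RHS /ee /lv /=; case: hr => -> /=; lia.
Qed.

Lemma rat_bound (q t : nat) (E : int) : (0 < q)%N -> t%:Z + 3 <= E ->
  ((q ^ t * (q ^ 3 + 2 * q ^ 2 + 2 * q + 1))%N)%:R <= (q%:Q) ^ E * (1 + 1 / q%:Q) ^+ 3.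
Proof.
move=> q0 hE.
have [d ->] : exists d : nat, E = (t + 3 + d)%N%:Z by exists `|(E - t%:Z - 3)%R|%N; lia.
rewrite -exprnP !exprD !(natrM, natrD, natrX).
set x := q%:Q.
have x1 : 1 <= x by rewrite /x ler1n.
have x0 : x != 0 by rewrite /x pnatr_eq0 -lt0n.
have y0 : 0 <= x ^+ t by rewrite exprn_ge0 // (le_trans ler01).
have z1 : 1 <= x ^+ d by rewrite exprn_ege1.
have -> : x ^+ t * x ^+ 3 * x ^+ d * (1 + 1 / x) ^+ 3 = x ^+ t * ((x + 1) ^+ 3 * x ^+ d).
  by field.
apply: ler_wpM2l => //.
have h1 : x ^+ 3 + 2%:R * x ^+ 2 + 2%:R * x + 1 <= (x + 1) ^+ 3.
  have -> : (x + 1) ^+ 3 = x ^+ 3 + 2%:R * x ^+ 2 + 2%:R * x + 1 + (x ^+ 2 + x) by ring.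
  rewrite lerDl addr_ge0 // ?exprn_ge0 // (le_trans ler01) //.
apply: (le_trans h1); rewrite ler_peMr //.
by rewrite exprn_ge0 // addr_ge0 // (le_trans ler01).
Qed.


Definition Pgt (g t : 'M[F]_3) := exists h k kk y, [/\ isX h, g = h *m lam *m k, isK' kk,
  isKn n y & lam *m t = kk *m lam *m k *m y].

Lemma sd g g' t : Pgt g t -> Pgt g' t -> same_dcoset v w n g g'.
Proof.
move=> [h1 [k1 [kk1 [y1 [hX1 Eg hk1 hy1 Et1]]]]] [h2 [k2 [kk2 [y2 [hX2 Eg' hk2 hy2 Et2]]]]].
have [h1' [hX1' e1]] := isX_linv hX1.
exists (h2 *m invmx kk2 *m kk1 *m h1'), (y1 *m invmx y2); split.
  apply: isX_F'x; apply: isX_mul => //; apply: isX_mul; last exact: isX_K'.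
  by apply: isX_mul => //; apply: isX_K'; apply: isK'_inv.
split; first by apply/inKnE; apply: isKn_mul => //; apply: isKn_inv.
have e2 : lam *m k2 = invmx kk2 *m (lam *m t) *m invmx y2.
  rewrite Et2 !mulmxA isK_invl ?mul1mx; last exact: isK'_K.
  by rewrite -(mulmxA _ y2) isK_invr ?mulmx1 //; exact: (isKn_K hy2).
rewrite Eg' -mulmxA e2 Et1 Eg -!mulmxA (mulmxA h1') e1 mul1mx.
done.
Qed.

Lemma choose_list (S T : seq 'M[F]_3) (P : 'M[F]_3 -> 'M[F]_3 -> Prop) :
  (forall g, g \in S -> exists t, t \in T /\ P g t) ->
  exists ts : seq 'M[F]_3, size ts = size S /\
    forall a, (a < size S)%N -> nth 0 ts a \in T /\ P (nth 0 S a) (nth 0 ts a).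
Proof.
elim: S => [|g S IH] h; first by exists [::].
have [t [tT Pt]] := h g (mem_head _ _).
have [ts [hs hts]] : exists ts : seq 'M[F]_3, size ts = size S /\
    forall a, (a < size S)%N -> nth 0 ts a \in T /\ P (nth 0 S a) (nth 0 ts a).
  by apply: IH => x hx; apply: h; rewrite inE hx orbT.
exists (t :: ts); split; first by rewrite /= hs.
by case=> [|a] //= ha; apply: hts.
Qed.


Lemma main_count (q : nat) (s0 : seq F) (j : nat) :
  size s0 = q -> res_ok s0 -> l1 + l2 + l3 = 0 -> (j %% 3 != 1)%N ->
  ((j %% 3 = 2)%N ->
     Num.max (l1 - l2) (Num.max (l2 - l3) (l3 - l1 + 1)) <= n%:Z - (j %/ 3)%:Z - 1) ->
  ((j %% 3 = 0)%N ->
     Num.max (l2 - l1) (Num.max (l3 - l2) (l1 - l3 - 1)) <= n%:Z - (j %/ 3)%:Z - 1) ->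
  dcoset_count_le v w n l1 l2 l3
    (if (j %% 3 == 0)%N
     then (q%:Q) ^ (3 * n%:Z - 2 * (j %/ 3)%:Z) * (1 + 1 / q%:Q) ^+ 3
     else (q%:Q) ^ (3 * n%:Z - 2 * (j %/ 3)%:Z - 2) * (1 + 1 / q%:Q) ^+ 3).
Proof.
move=> hq hs hsum hj h2 h0 S hcell hdist.
pose E : int := if (j %% 3 == 0)%N then 3 * n%:Z - 2 * (j %/ 3)%:Z else 3 * n%:Z - 2 * (j %/ 3)%:Z - 2.
have -> : (if (j %% 3 == 0)%N
     then (q%:Q) ^ (3 * n%:Z - 2 * (j %/ 3)%:Z) * (1 + 1 / q%:Q) ^+ 3
     else (q%:Q) ^ (3 * n%:Z - 2 * (j %/ 3)%:Z - 2) * (1 + 1 / q%:Q) ^+ 3) =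
     (q%:Q) ^ E * (1 + 1 / q%:Q) ^+ 3 by rewrite /E; case: ifP.
have [p0 [p1 [p2 [hd [hA hB hC] hE]]]] := order_exists hsum hj h2 h0 (erefl E).
case/and3P: hd => h01 h02 h12.
pose T := Tall s0 p0 p1 p2 (mn (ee p0 p1)) (mn (ee p1 p2)) (mn (ee p0 p2)).
have hQ : forall g, g \in S -> exists t, t \in T /\ Pgt g t.
  move=> g /hcell [h [k [hh [hk Eg]]]].
  have [c0 [c1 [c2 [d01 [d02 [d12 [hc D1 D2 D3 hr]]]]]]] :=
    cover hs h01 h02 h12 hA hB hC (proj1 (inKE k) hk).
  exists (mkT p0 p1 p2 c0 c1 c2 d01 d02 d12); split; first exact: mem_Tall.
  have [g' [y [hg' [hy Et]]]] := hr.
  have [kk [hkk Ekk]] := isH_lam hg'.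
  exists h, k, kk, y; split => //; first exact: isX_cell.
  by rewrite Et !mulmxA Ekk.
have [ts [hts hts2]] := choose_list hQ.
have uts : uniq ts.
  apply/(uniqP 0) => a b; rewrite !inE hts => ha hb e.
  apply/eqP; apply: contraT => neq; exfalso.
  apply: (hdist a b ha hb (elimN eqP neq)).
  have [_ Pa] := hts2 a ha; have [_ Pb] := hts2 b hb.
  by apply: (sd Pa); rewrite e.
have sub : {subset ts <= T}.
  move=> x /(nthP 0) [a ha <-]; rewrite hts in ha; exact: (hts2 a ha).1.
have hsz := uniq_leq_size uts sub.
have q0 : (0 < q)%N.
  case: hs => _ h; have [y ys _] := h 0 (vge0 0).
  by rewrite -hq; case: (s0) ys.
have [mA mA0] := mnE hA; have [mB mB0] := mnE hB; have [mC mC0] := mnE hC.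
apply: (le_trans (y := (size T)%:R)); first by rewrite -hts ler_nat.
rewrite /T size_Tall // hq.
apply: rat_bound => //.
move: hE mA0 mB0 mC0; lia.
Qed.

End Val.

Unset Implicit Arguments.

Theorem lemma9p10 (F : fieldType) (v : F -> int) (w : F) (p q : nat)
  (n j : nat) (l1 l2 l3 : int) :
  padic_field v w p q -> p != 2%N -> p != 3%N ->
  (1 <= n)%N -> (2 <= j)%N -> (j %% 3 != 1)%N ->
  l1 + l2 + l3 = 0 ->
  ((j %% 3 = 2)%N ->
     Num.max (l1 - l2) (Num.max (l2 - l3) (l3 - l1 + 1))
       <= n%:Z - (j %/ 3)%:Z - 1) ->
  ((j %% 3 = 0)%N ->
     Num.max (l2 - l1) (Num.max (l3 - l2) (l1 - l3 - 1))
       <= n%:Z - (j %/ 3)%:Z - 1) ->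
  dcoset_count_le v w n l1 l2 l3
    (if (j %% 3 == 0)%N
     then (q%:Q) ^ (3 * n%:Z - 2 * (j %/ 3)%:Z) * (1 + 1 / q%:Q) ^+ 3
     else (q%:Q) ^ (3 * n%:Z - 2 * (j %/ 3)%:Z - 2) * (1 + 1 / q%:Q) ^+ 3).
Proof.
move=> [[[vMh vDh] [w0 vw]] _ [s0 [hsz hsR hsd hcov]] _ _] _ _ hn _ hj hsum h2 h0.
apply: (main_count vMh vDh w0 vw hn hsz _ hsum hj h2 h0).
split.
  by move=> y /hsR /in_RE.
move=> x /in_RE /hcov [y [ys hy]]; exists y => //; exact/congrE.
Qed.
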